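(* There exist infinitely many positive odd integers $n$ with the property that there exist positive integers $d_1, d_2$, each dividing $\frac{n^2+1}{2}$, such that $d_1+d_2=2n$. Moreover, any such pair satisfies $\gcd(d_1,d_2)=1$ and $d_1d_2=\frac{n^2+1}{2}$. *)

(* Defs.v *)
From mathcomp Require Import all_boot.
(* n is odd, so n^2+1 is even and (n^2+1)/2 = (n^2+1) %/ 2 exactly. *)
Definition half_sq1 (n : nat) : nat := (n ^ 2 + 1) %/ 2.

Definition good_pair (n d1 d2 : nat) : Prop :=
  0 < d1 /\ 0 < d2 /\ d1 %| half_sq1 n /\ d2 %| half_sq1 n /\ d1 + d2 = 2 * n.

(* Main.v *)
Require Import Defs.
From mathcomp Require Import all_boot.
From mathcomp Require Import zify.

Lemma vieta s : forall x y k, x + y <= s -> 0 < x -> 0 < y ->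
  x*x + y*y + 4 = k*x*y -> k = 3 \/ k = 6.
Proof.
elim: s => [|s IH] x y k Hs Hx Hy E; first lia.
wlog Hxy : x y Hs Hx Hy E / y <= x.
  move=> W; case: (leqP y x) => h; first exact: (W x y Hs Hx Hy E h).
  apply: (W y x); try lia; nia.
case: (ltnP y 3) => Hy3.
  have [Ey|Ey] : y = 1 \/ y = 2 by lia; subst y.
  - have Hd : x %| 5.
      apply/dvdnP; exists (k - x); nia.
    move: Hd; rewrite dvdn_divisors // !inE /=.
    by case/orP=> /eqP Ex; subst x; nia.
  - have Hd : x %| 8.
      apply/dvdnP; exists (2*k - x); nia.
    move: Hd; rewrite dvdn_divisors // !inE /=.
    by case/or4P=> /eqP Ex; subst x; nia.
case: (eqVneq x y) => [exy|nxy].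
  subst x; exfalso.
  case: (leqP k 2) => hk; nia.
have Hxy' : y < x by lia.
have Hle : x <= k * y by nia.
have [x' Hx'] : exists x', x' + x = k * y by exists (k*y - x); lia.
have E1 : x' * x = y*y + 4 by nia.
have Hlt : x' < x by nia.
have Hpos : 0 < x' by nia.
apply: (IH x' y k) => //; [lia | nia].
Qed.

Lemma pell N : exists n k, N < n /\ n*n = 2*(k*k) + 1.
Proof.
elim: N => [|N [n [k [h1 h2]]]]; first by exists 3, 2.
exists (3*n+4*k), (2*n+3*k); split; nia.
Qed.

Theorem proposition1 :
  (forall N : nat, exists n : nat,
      N < n /\ odd n /\ exists d1 d2 : nat, good_pair n d1 d2) /\
  (forall n d1 d2 : nat, 0 < n -> odd n -> good_pair n d1 d2 ->
      gcdn d1 d2 = 1 /\ d1 * d2 = half_sq1 n).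
Proof.
split.
  move=> N; have [n [k [h1 h2]]] := pell N.
  have hkn : k < n by nia.
  have hh : half_sq1 n = (n+k)*(n-k).
    rewrite /half_sq1; have -> : n ^ 2 + 1 = (k*k+1) * 2 by rewrite expnS expn1; lia.
    rewrite mulnK //; nia.
  exists n; split => //; split.
    have : odd (n*n) by rewrite h2 addn1 /= oddM.
    by rewrite oddM andbb.
  exists (n+k), (n-k); rewrite /good_pair hh; split; first lia.
  split; first lia.
  split; first exact: dvdn_mulr.
  split; first exact: dvdn_mull.
  lia.
move=> n d1 d2 n0 on [p1 [p2 [h1 [h2 hs]]]].
have [m hm] : exists m, n = 2*m+1.
  exists n./2; rewrite -{1}(odd_double_half n) on; rewrite -muln2; lia.
have hH : half_sq1 n = 2*(m*m+m)+1.
  rewrite /half_sq1 hm; have -> : (2*m+1)^2 + 1 = (2*(m*m+m)+1)*2.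
    rewrite expnS expn1; nia.
  by rewrite mulnK.
set h := half_sq1 n in h1 h2 hH *.
have hodd : odd h by rewrite hH addn1 /= oddM.
have g1 : gcdn d1 d2 = 1.
  set g := gcdn d1 d2.
  have gh : g %| h by apply: dvdn_trans h1; exact: dvdn_gcdl.
  have g2n : g %| 2 * n by rewrite -hs dvdn_add ?dvdn_gcdl ?dvdn_gcdr.
  have g2 : g %| 2.
    have a : g %| 2*n*n by exact: dvdn_mulr.
    have b : g %| 2*h*2 by rewrite dvdn_mulr // dvdn_mull.
    have e : 2*h*2 = 2*n*n + 2 by rewrite hH hm; nia.
    rewrite e in b.
    by rewrite -(dvdn_addr _ a).
  move: g2; rewrite dvdn_divisors // !inE /=.
  case/orP=> /eqP g_2 //.
  by move: gh; rewrite g_2 dvdn2 hodd.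
split=> //.
have hl : d1 * d2 %| h.
  rewrite -(muln_lcm_gcd d1 d2) g1 muln1; by rewrite dvdn_lcm h1 h2.
have [t ht] := dvdnP hl.
have e2 : h * 2 = n * n + 1 by rewrite hH hm; nia.
have tp : 0 < t by move: ht; rewrite hH; case: t => //= ?; lia.
have E : d1*d1 + d2*d2 + 4 = (8*t - 2)*d1*d2.
  have e3 : d1*d1 + d2*d2 + 2*(d1*d2) = 4 * (n*n).
    have : (d1+d2)*(d1+d2) = (2*n)*(2*n) by rewrite hs; rewrite mulnACA.
    rewrite mulnDl !mulnDr (mulnC d2 d1) => e; lia.
  have e4 : t * (d1*d2) * 2 = n*n + 1 by rewrite -ht.
  have e5 : (8*t-2)*d1*d2 = 8*(t*(d1*d2)) - 2*(d1*d2).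
    by rewrite -mulnA mulnBl -(mulnA 8).
  rewrite e5; move: e3 e4; generalize (t*(d1*d2)) (d1*d2) (n*n) (d1*d1) (d2*d2); lia.
have [k3|k6] := vieta (d1+d2) d1 d2 (8*t-2) (leqnn _) p1 p2 E.
  lia.
have t1 : t = 1 by lia.
by rewrite ht t1 mul1n.
Qed.
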